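(* For every finite capacitated graph $G=(V,E,c_V,c_E)$ with nonnegative vertex and edge capacities, the Rising-Tide algorithm terminates and returns a maximal feasible fractional matching of $G$.
   Context: Let $G=(V,E,c_V,c_E)$ be a graph (edges may include self-loops) with vertex capacities $c_V:V\to\mathbb{R}_{\ge0}$ and edge capacities $c_E:E\to\mathbb{R}_{\ge0}$. A function $\mu:E\to\mathbb{R}_{\ge0}$ is a feasible fractional matching if $\mu(i,j)\le c_E(i,j)$ for every edge and $\sum_j\mu(i,j)\le c_V(i)$ for every vertex $i$, where a self-loop $(i,i)$ counts only once in the sum for $i$. It is maximal if no feasible $\mu'\ne\mu$ satisfies $\mu'\ge\mu$ pointwise. Vertex $i$ is saturated if $\sum_j\mu(i,j)=c_V(i)$; edge $(i,j)$ is saturated if $\mu(i,j)=c_E(i,j)$. Rising-Tide: set $E'=\{e\in E: c_E(e)>0\}$ and $\mu\equiv0$; while $E'\neq\emptyset$: choose the maximum $\delta\ge0$ such that $\mu+\delta\cdot\mathbf{1}_{E'}$ is a feasible fractional matching, set $\mu\gets\mu+\delta\mathbf{1}_{E'}$, and remove from $E'$ every edge $(i,j)$ such that $i$, $j$, or $(i,j)$ is saturated; finally return $\mu$. *)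

(* Defs.v *)
From HB Require Import structures.
From mathcomp Require Import all_boot all_order all_algebra.
From mathcomp Require Import reals.
Set Implicit Arguments. Unset Strict Implicit. Unset Printing Implicit Defensive.
Import Order.TTheory GRing.Theory Num.Theory.
Local Open Scope ring_scope.

(* A graph on a finite vertex type V: an edge is an unordered pair {i,j},
   represented as a set of vertices with 1 element (self-loop {i}) or
   2 elements. *)

Section RisingTide.
Variables (R : realType) (V : finType) (E : {set {set V}})
          (cV : V -> R) (cE : {set V} -> R).

Definition graph_edges_ok : Prop :=
  forall e, e \in E -> (0 < #|e| <= 2)%N.

(* total load at vertex i; a self-loop {i} is counted once *)
Definition load (mu : {set V} -> R) (i : V) : R :=
  \sum_(e in E | i \in e) mu e.

Definition feasible (mu : {set V} -> R) : Prop :=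
  (forall e, e \notin E -> mu e = 0) /\
  (forall e, e \in E -> 0 <= mu e /\ mu e <= cE e) /\
  (forall i, load mu i <= cV i).

Definition maximal_feasible (mu : {set V} -> R) : Prop :=
  feasible mu /\
  forall mu', feasible mu' -> (forall e, mu e <= mu' e) -> mu' = mu.

Definition raise (mu : {set V} -> R) (Ep : {set {set V}}) (d : R) :=
  fun e => mu e + (if e \in Ep then d else 0).

Definition remaining (mu : {set V} -> R) (Ep : {set {set V}}) :=
  [set e in Ep | ~~ ((mu e == cE e) || [exists i in e, load mu i == cV i])].

Definition rt_state := ({set {set V}} * ({set V} -> R))%type.

Definition rt_init : rt_state := ([set e in E | 0 < cE e], fun _ => 0).

Definition rt_step (s s' : rt_state) : Prop :=
  s.1 != set0 /\
  exists d : R,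
    [/\ 0 <= d, feasible (raise s.2 s.1 d),
        (forall d', 0 <= d' -> feasible (raise s.2 s.1 d') -> d' <= d),
        s'.2 = raise s.2 s.1 d &
        s'.1 = remaining (raise s.2 s.1 d) s.1].

Definition rt_run (n : nat) (s : nat -> rt_state) : Prop :=
  [/\ s 0%N = rt_init,
      (forall k, (k < n)%N -> rt_step (s k) (s k.+1)) &
      (s n).1 = set0].

End RisingTide.

(* Main.v *)
Require Import Defs.
From HB Require Import structures.
From mathcomp Require Import all_boot all_order all_algebra.
From mathcomp Require Import reals.
From mathcomp Require Import boolp lra.
Import Order.TTheory GRing.Theory Num.Theory.
Local Open Scope ring_scope.

Section Proof.
Variables (R : realType) (V : finType) (E : {set {set V}})
          (cV : V -> R) (cE : {set V} -> R).
Hypothesis hcV : forall i, 0 <= cV i.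
Hypothesis hcE : forall e, e \in E -> 0 <= cE e.

Definition blocked (mu : {set V} -> R) e :=
  mu e = cE e \/ exists2 i, i \in e & load E mu i = cV i.

Definition Inv (s : rt_state R V) :=
  [/\ feasible E cV cE s.2, s.1 \subset E &
      forall e, e \in E -> e \notin s.1 -> blocked s.2 e].

Lemma load_raise (mu : {set V} -> R) (Ep : {set {set V}}) (d : R) (i : V) : Ep \subset E ->
  load E (raise mu Ep d) i = load E mu i + d *+ #|[set e in Ep | i \in e]|.
Proof.
move=> sub; rewrite /load /raise big_split /=; congr (_ + _).
rewrite -big_mkcondr /= -sumr_const; apply: eq_bigl => e.
rewrite inE; case: (boolP (e \in Ep)) => h.
  by rewrite (subsetP sub e h) /= andbT.
by rewrite andbF.
Qed.

Lemma load_mono (mu : {set V} -> R) (Ep : {set {set V}}) (d : R) (i : V) : 0 <= d -> load E mu i <= load E (raise mu Ep d) i.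
Proof.
move=> d0; rewrite /load /raise; apply: ler_sum => e _.
by rewrite lerDl; case: ifP.
Qed.

Lemma inv_init : Inv (rt_init E cE).
Proof.
split => /=.
- split; first by [].
  split; first by move=> e eE; split => //; exact: hcE.
  by move=> i; rewrite /load big1_eq.
- by apply/subsetP => e; rewrite inE => /andP[].
- move=> e eE; rewrite inE eE /= -leNgt => h; left.
  by apply/le_anti; rewrite hcE // h.
Qed.

Lemma inv_step s s' : Inv s -> rt_step E cV cE s s' -> Inv s'.
Proof.
case: s => Ep mu; case: s' => Ep' mu' [f sub bl] /= [_ [d [d0 feas _ e2 e1]]].
rewrite /= in e1 e2; subst Ep' mu'.
split => //.
- apply/subsetP => e; rewrite inE => /andP[/(subsetP sub) ? _] //.
- move=> e eE; case: (boolP (e \in Ep)) => eEp.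
    rewrite inE eEp /= negbK => /orP[/eqP h|/existsP [i /andP [ie /eqP h]]].
      by left.
    by right; exists i.
  move=> _; case: (bl e eE eEp) => [h|[i ie h]].
    by left; rewrite /= /raise (negbTE eEp) addr0.
  right; exists i => //; apply/eqP; rewrite /= eq_le feas.2.2 /= -h.
  exact: load_mono.
Qed.

Lemma inv_max s : Inv s -> s.1 = set0 -> maximal_feasible E cV cE s.2.
Proof.
case: s => Ep mu [feas _ bl] /= E0; subst Ep; simpl in feas, bl.
split => // mu' f' ge; apply: funext => e.
case: (boolP (e \in E)) => eE; last by rewrite f'.1 // feas.1.
have := bl e eE; rewrite in_set0 => /(_ isT) [h|[i ie h]].
  by apply/le_anti; rewrite (ge e) andbT h; exact: (f'.2.1 e eE).2.
have hs : \sum_(e in E | i \in e) (mu' e - mu e) = 0.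
  rewrite sumrB.
  have h1 : load E mu' i <= cV i := f'.2.2 i.
  have h2 : load E mu i <= load E mu' i by apply: ler_sum => x _; exact: ge.
  rewrite /load in h1 h2 h; lra.
apply: subr0_eq; apply: (psumr_eq0P _ hs); last by rewrite eE ie.
by move=> x _; rewrite subr_ge0.
Qed.

Lemma step_exists s : Inv s -> s.1 != set0 ->
  exists s', rt_step E cV cE s s' /\ (#|s'.1| < #|s.1|)%N.
Proof.
case: s => Ep mu [[f0 [f1 f2]] sub bl] /= ne; simpl in f0, f1, f2, sub, bl.
pose k i := #|[set e in Ep | i \in e]|.
pose a (c : ({set V} + V)%type) : R :=
  match c with inl e => (e \in Ep)%:R | inr i => (k i)%:R end.
pose b (c : ({set V} + V)%type) : R :=
  match c with inl e => cE e - mu e | inr i => cV i - load E mu i end.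
have fiff : forall d, 0 <= d ->
   feasible E cV cE (raise mu Ep d) <-> forall c, 0 < a c -> d * a c <= b c.
  move=> d d0; split.
    move=> [h0 [h1 h2]] [e|i] /=.
      case: (boolP (e \in Ep)) => eEp; last by rewrite ltxx.
      move=> _; have := (h1 e (subsetP sub e eEp)).2.
      rewrite /raise eEp mulr1; lra.
    move=> _; have := h2 i; rewrite load_raise // -mulr_natr /k; lra.
  move=> h; split.
    move=> e eE; rewrite /raise f0 //.
    case: ifP => eEp; last by rewrite addr0.
    by case/negP: eE; exact: (subsetP sub).
  split.
    move=> e eE; rewrite /raise; case: ifP => eEp; last by rewrite addr0; exact: f1.
    have := h (inl e); rewrite /= eEp ltr01 => /(_ isT); rewrite mulr1.
    have := f1 e eE; case=> ??; split; lra.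
  move=> i; rewrite load_raise //.
  case: (posnP (k i)) => hk.
    by rewrite /k in hk; rewrite hk mulr0n addr0.
  have := h (inr i); rewrite /= ltr0n hk => /(_ isT).
  rewrite -mulr_natr /k; lra.
have raise0 : raise mu Ep 0 = mu.
  by apply: funext => e; rewrite /raise; case: ifP; rewrite addr0.
have bge : forall c, 0 < a c -> 0 <= b c.
  move=> c ac; have := (fiff 0 (lexx _)).1; rewrite raise0 => /(_ (conj f0 (conj f1 f2))).
  by move=> /(_ c ac); rewrite mul0r.
have [e0 e0Ep] := set0Pn _ ne.
have Pa0 : 0 < a (inl e0) by rewrite /= e0Ep ltr01.
have [c Pc minc] := @arg_minP _ R _ (inl e0) (fun c => 0 < a c) (fun c => b c / a c) Pa0.
pose d := b c / a c.
have d0 : 0 <= d by apply: divr_ge0; [exact: bge|exact: ltW].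
have hd : forall c', 0 < a c' -> d * a c' <= b c'.
  by move=> c' h'; rewrite -ler_pdivlMr //; exact: minc.
have feas : feasible E cV cE (raise mu Ep d) by apply/(fiff d d0).
have tight : d * a c = b c by rewrite /d divfK // gt_eqF.
exists (remaining E cV cE (raise mu Ep d) Ep, raise mu Ep d); split.
  split => //; exists d; split => //.
  move=> d' d'0 /(fiff d' d'0) /(_ c Pc) h.
  by rewrite /d ler_pdivlMr.
apply: proper_card; apply/properP; split.
  by apply/subsetP => e; rewrite inE => /andP[].
clear minc hd; destruct c as [e|i]; simpl in Pc, tight.
  have eEp : e \in Ep by move: Pc; case: (e \in Ep) => //; rewrite ltxx.
  exists e => //; rewrite inE negb_and negbK; apply/orP; right.
  apply/orP; left; apply/eqP; rewrite /raise eEp.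
  rewrite eEp mulr1 in tight; lra.
have : (0 < k i)%N by rewrite -(ltr0n R).
rewrite card_gt0 => /set0Pn [e]; rewrite inE => /andP [eEp ie].
exists e => //; rewrite inE negb_and negbK; apply/orP; right.
apply/orP; right; apply/existsP; exists i; rewrite ie /=; apply/eqP.
rewrite load_raise // -mulr_natr -/(k i); lra.
Qed.

Lemma run_exists m : forall s, Inv s -> (#|s.1| <= m)%N ->
  exists n (t : nat -> rt_state R V),
    [/\ t 0%N = s, forall k, (k < n)%N -> rt_step E cV cE (t k) (t k.+1)
      & (t n).1 = set0].
Proof.
elim: m => [|m IH] s hs hc.
  exists 0%N, (fun _ => s); split => //.
  by apply: cards0_eq; apply/eqP; rewrite -leqn0.
case: (eqVneq s.1 set0) => h0.
  by exists 0%N, (fun _ => s).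
have [s' [st lt]] := @step_exists s hs h0.
have [n [t [t0 tk tn]]] := IH s' (@inv_step s s' hs st) (leq_trans lt hc).
exists n.+1, (fun k => if k is k'.+1 then t k' else s); split => //.
by case => [|k] /= hk; [rewrite t0|exact: tk].
Qed.

End Proof.

Theorem lemma10 (R : realType) (V : finType) (E : {set {set V}})
    (cV : V -> R) (cE : {set V} -> R)
    (hE : graph_edges_ok E)
    (hcV : forall i, 0 <= cV i)
    (hcE : forall e, e \in E -> 0 <= cE e) :
  (exists (n : nat) (s : nat -> rt_state R V), rt_run E cV cE n s) /\
  (forall (n : nat) (s : nat -> rt_state R V),
      rt_run E cV cE n s -> maximal_feasible E cV cE (s n).2).
Proof.
have init := @inv_init R V E cV cE hcV hcE.
split.
  have [n [t [t0 tk tn]]] := @run_exists R V E cV cE _ _ init (leqnn _).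
  by exists n, t; split.
move=> n s [s0 st sn].
have hI : forall k, (k <= n)%N -> Inv R V E cV cE (s k).
  elim => [|k IH] hk; first by rewrite s0.
  exact: inv_step (IH (ltnW hk)) (st k hk).
exact: inv_max (hI n (leqnn n)) sn.
Qed.
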